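(* Let $a\ge b\ge1$ be integers with either $b\ge2$, or $b=1$ and $a\ge5$, and $A=\begin{pmatrix}2&-a\\-b&2\end{pmatrix}$. Then: (1) for $i=1,2$ and $j,k\in\mathbb Z_+$, $\gamma=\beta_i^k+\beta_i^j$ satisfies $(\gamma,\gamma)>0$; moreover (a) if $b\ge2$, then $\beta_i^k+\beta_i^j$ is never a root; (b) if $b=1$ and $a\ge5$, then $\beta_1^{2k+1}+\beta_1^{2k+3}$ and $\beta_2^{2k}+\beta_2^{2k+2}$ ($k\in\mathbb Z_+$) are real roots, and these are the only pairs of roots of the same type ($\beta_1^\cdot,\beta_1^\cdot$ or $\beta_2^\cdot,\beta_2^\cdot$) whose sum is a real root; (2) for all $j,k\in\mathbb Z_+$, $\gamma=\beta_1^k+\beta_2^j$ is a root, and $(\gamma,\gamma)\le0$ unless $b=1$ and $(k,j)=(0,0)$.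
   Context: Let $\mathfrak g(A)$ be the Kac–Moody algebra with simple roots $\alpha_1,\alpha_2$, root system $\Delta$, invariant form $(\alpha_1,\alpha_1)=2$, $(\alpha_2,\alpha_2)=2a/b$, $(\alpha_1,\alpha_2)=-a$; a root $\alpha$ is real iff $(\alpha,\alpha)>0$. $\mathbb Z_+=\{0,1,2,\dots\}$. Define $c_0=d_0=0$, $c_1=d_1=1$, $c_{k+2}+c_k=a d_{k+1}$, $d_{k+2}+d_k=b c_{k+1}$, and $\beta_1^j=c_j\alpha_1+d_{j+1}\alpha_2$, $\beta_2^j=c_{j+1}\alpha_1+d_j\alpha_2$ (the positive real roots). *)

(* Defs.v *)
From mathcomp Require Import all_boot all_order all_algebra.
Set Implicit Arguments. Unset Strict Implicit. Unset Printing Implicit Defensive.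
Import Order.TTheory GRing.Theory Num.Theory.
Local Open Scope ring_scope.

(* An element x1 alpha_1 + x2 alpha_2 of the root lattice Q is the pair (x1,x2). *)
Definition rvec := (int * int)%type.
Definition vadd (u v : rvec) : rvec := (u.1 + v.1, u.2 + v.2).
Definition vopp (u : rvec) : rvec := (- u.1, - u.2).
Definition alpha1 : rvec := (1, 0).
Definition alpha2 : rvec := (0, 1).

(* Invariant form: (a1,a1)=2, (a2,a2)=2a/b, (a1,a2)=-a. *)
Definition form (a b : nat) (u v : rvec) : rat :=
  2 * (u.1%:~R * v.1%:~R) + (2 * a%:R / b%:R) * (u.2%:~R * v.2%:~R)
  - a%:R * (u.1%:~R * v.2%:~R + u.2%:~R * v.1%:~R).
Definition norm2 (a b : nat) (u : rvec) : rat := form a b u u.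

(* Pairings with the simple coroots: <alpha_j, alpha_i^v> = a_ij,
   a_12 = -a, a_21 = -b. *)
Definition pair1 (a : nat) (u : rvec) : int := 2 * u.1 - a%:Z * u.2.
Definition pair2 (b : nat) (u : rvec) : int := - (b%:Z * u.1) + 2 * u.2.

Definition refl1 (a : nat) (u : rvec) : rvec := (u.1 - pair1 a u, u.2).
Definition refl2 (b : nat) (u : rvec) : rvec := (u.1, u.2 - pair2 b u).

(* W-orbit of a set P (W generated by r1, r2; reflections are involutions). *)
Inductive Worbit (a b : nat) (P : rvec -> Prop) : rvec -> Prop :=
| Wo_base u : P u -> Worbit a b P u
| Wo_r1 u : Worbit a b P u -> Worbit a b P (refl1 a u)
| Wo_r2 u : Worbit a b P u -> Worbit a b P (refl2 b u).

Definition simple_root (u : rvec) : Prop := u = alpha1 \/ u = alpha2.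

(* Kac's fundamental set K: alpha in Q_+ \ {0}, <alpha, alpha_i^v> <= 0
   for i = 1,2, and supp alpha connected in the Dynkin diagram. *)
Definition fund_set_K (a b : nat) (u : rvec) : Prop :=
  [/\ (0 <= u.1) && (0 <= u.2), u <> (0, 0), pair1 a u <= 0, pair2 b u <= 0
    & ((u.1 != 0) && (u.2 != 0) -> (a != 0)%N)].

(* Root system Delta = Delta^re  u  W(K)  u  -W(K)   (Kac, Prop. 5.1, Thm 5.4). *)
Definition is_root (a b : nat) (u : rvec) : Prop :=
  Worbit a b simple_root u \/ Worbit a b (fund_set_K a b) u
  \/ Worbit a b (fund_set_K a b) (vopp u).

Definition real_root (a b : nat) (u : rvec) : Prop :=
  is_root a b u /\ 0 < norm2 a b u.

(* cd n = ((c_n, d_n), (c_{n+1}, d_{n+1})) *)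
Fixpoint cd (a b : nat) (n : nat) : (int * int) * (int * int) :=
  match n with
  | 0 => ((0, 0), (1, 1))
  | n'.+1 => let: (p, q) := cd a b n' in
             (q, (a%:Z * q.2 - p.1, b%:Z * q.1 - p.2))
  end.
Definition cseq (a b : nat) (n : nat) : int := (cd a b n).1.1.
Definition dseq (a b : nat) (n : nat) : int := (cd a b n).1.2.

Definition beta1 (a b : nat) (j : nat) : rvec := (cseq a b j, dseq a b j.+1).
Definition beta2 (a b : nat) (j : nat) : rvec := (cseq a b j.+1, dseq a b j).

(* Main.v *)
Require Import Defs.
From mathcomp Require Import all_boot all_order all_algebra.
From mathcomp Require Import zify ring lra.
Import Order.TTheory GRing.Theory Num.Theory.
Local Open Scope ring_scope.


Lemma cdS (a b : nat) n : cd a b n.+1 =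
  ((cd a b n).2, (a%:Z * (cd a b n).2.2 - (cd a b n).1.1, b%:Z * (cd a b n).2.1 - (cd a b n).1.2)).
Proof. by rewrite /=; case: (cd a b n) => p q. Qed.

Lemma c_rec (a b : nat) n : cseq a b n.+2 = a%:Z * dseq a b n.+1 - cseq a b n.
Proof. by rewrite /cseq /dseq !cdS. Qed.
Lemma d_rec (a b : nat) n : dseq a b n.+2 = b%:Z * cseq a b n.+1 - dseq a b n.
Proof. by rewrite /cseq /dseq !cdS. Qed.
Lemma c0 a b : cseq a b 0 = 0. Proof. by []. Qed.
Lemma c1 a b : cseq a b 1 = 1. Proof. by []. Qed.
Lemma d0 a b : dseq a b 0 = 0. Proof. by []. Qed.
Lemma d1 a b : dseq a b 1 = 1. Proof. by []. Qed.

Definition Ec (a b : nat) n : int := 2 * cseq a b n.+1 - a%:Z * dseq a b n.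
Definition Ed (a b : nat) n : int := - (b%:Z * cseq a b n) + 2 * dseq a b n.+1.

Lemma Ec_rec a b n : Ec a b n.+2 = a%:Z * Ed a b n.+1 - Ec a b n.
Proof.
rewrite /Ec /Ed (c_rec a b n.+1) (d_rec a b n).
have := c_rec a b n; have := d_rec a b n.+1. lia.
Qed.
Lemma Ed_rec a b n : Ed a b n.+2 = b%:Z * Ec a b n.+1 - Ed a b n.
Proof.
rewrite /Ec /Ed (d_rec a b n.+1) (c_rec a b n).
have := c_rec a b n.+1; have := d_rec a b n. lia.
Qed.

Definition Rel (a b : nat) (e : bool) (x y : int) : Prop :=
  if e then x = y else b%:Z * x = a%:Z * y.

Lemma rel_seq (a b : nat) (x y : nat -> int) e :
  (forall n, x n.+2 = a%:Z * y n.+1 - x n) ->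
  (forall n, y n.+2 = b%:Z * x n.+1 - y n) ->
  Rel a b e (x 0) (y 0) -> Rel a b (~~ e) (x 1) (y 1) ->
  forall n, Rel a b (if odd n then ~~ e else e) (x n) (y n).
Proof.
move=> hx hy h0 h1.
suff H : forall n, Rel a b (if odd n then ~~ e else e) (x n) (y n) /\
                   Rel a b (if odd n.+1 then ~~ e else e) (x n.+1) (y n.+1).
  by move=> n; case: (H n).
elim=> [|n [IH1 IH2]]; first by split.
split=> //.
clear h0 h1; move: IH1 IH2; rewrite /Rel /= hx hy negbK.
case: (odd n); case: e => /= h1' h2'; nia.
Qed.


Lemma Ec0 a b : Ec a b 0 = 2. Proof. rewrite /Ec c1 d0; lia. Qed.
Lemma Ec1 a b : Ec a b 1 = a%:Z. Proof. rewrite /Ec c_rec d1 c0; lia. Qed.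
Lemma Ed0 a b : Ed a b 0 = 2. Proof. rewrite /Ed c0 d1; lia. Qed.
Lemma Ed1 a b : Ed a b 1 = b%:Z. Proof. rewrite /Ed d_rec c1 d0; lia. Qed.

Lemma EcEd_rel a b n : Rel a b (~~ odd n) (Ec a b n) (Ed a b n).
Proof.
have := @rel_seq a b (Ec a b) (Ed a b) true (Ec_rec a b) (Ed_rec a b).
move=> H; have {H}H := H ltac:(by rewrite /Rel Ec0 Ed0) ltac:(rewrite /Rel /= Ec1 Ed1; lia) n.
by case: (odd n) H.
Qed.
Lemma EcEd_even a b n : ~~ odd n -> Ec a b n = Ed a b n.
Proof. by have := EcEd_rel a b n; rewrite /Rel; case: (odd n). Qed.
Lemma EcEd_odd a b n : odd n -> b%:Z * Ec a b n = a%:Z * Ed a b n.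
Proof. by have := EcEd_rel a b n; rewrite /Rel; case: (odd n). Qed.

Lemma cd_rel a b n : Rel a b (odd n) (cseq a b n) (dseq a b n).
Proof.
have := @rel_seq a b (cseq a b) (dseq a b) false (c_rec a b) (d_rec a b).
move=> H; have {H}H := H ltac:(rewrite /Rel /= c0 d0; lia) ltac:(by rewrite /Rel /=) n.
by case: (odd n) H.
Qed.
Lemma cd_odd a b n : odd n -> cseq a b n = dseq a b n.
Proof. by have := cd_rel a b n; rewrite /Rel; case: (odd n). Qed.
Lemma cd_even a b n : ~~ odd n -> b%:Z * cseq a b n = a%:Z * dseq a b n.
Proof. by have := cd_rel a b n; rewrite /Rel; case: (odd n). Qed.

Lemma mono2 a b : (2 <= b)%N -> (b <= a)%N -> forall n,
  (0 < Ec a b n <= Ec a b n.+1) /\ (0 < Ed a b n <= Ed a b n.+1).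
Proof.
move=> hb hab; elim=> [|n [/andP[h1 h2] /andP[h3 h4]]].
  by rewrite Ec0 Ec1 Ed0 Ed1; split; apply/andP; split; lia.
rewrite Ec_rec Ed_rec.
case: (boolP (odd n.+1)) => hp.
  have := @EcEd_odd a b _ hp; split; apply/andP; split; nia.
have := @EcEd_even a b _ hp; split; apply/andP; split; nia.
Qed.

Lemma b1_stepE a m : Ed a 1 (m.*2).+2 = a%:Z * Ed a 1 (m.*2).+1 - Ed a 1 m.*2.
Proof.
rewrite Ed_rec; have := EcEd_odd a 1 (m.*2).+1; rewrite /= odd_double /=.
move=> H; have {H}H := H erefl; lia.
Qed.
Lemma b1_stepO a m : Ed a 1 (m.*2).+3 = Ed a 1 (m.*2).+2 - Ed a 1 (m.*2).+1.
Proof.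
rewrite Ed_rec; have := EcEd_even a 1 (m.*2).+2; rewrite /= odd_double /=.
move=> H; have {H}H := H erefl; lia.
Qed.
Lemma b1_Ec a n : Ec a 1 n = if odd n then a%:Z * Ed a 1 n else Ed a 1 n.
Proof.
case: (boolP (odd n)) => h; first by have := EcEd_odd a 1 n h; lia.
exact: EcEd_even a 1 n h.
Qed.

Lemma b1_J a : (5 <= a)%N -> forall m,
  0 < Ed a 1 m.*2 /\ Ed a 1 (m.*2).+1 <= Ed a 1 m.*2 <= 2 * Ed a 1 (m.*2).+1.
Proof.
move=> ha; elim=> [|m [h0 /andP[h1 h2]]].
  rewrite /= Ed0 Ed1; split; lia.
have E: (m.+1).*2 = (m.*2).+2 by rewrite doubleS.
rewrite E b1_stepE.
have := b1_stepO a m; rewrite b1_stepE => h3.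
rewrite -[(m.*2).+3]/((m.*2).+2.+1) in h3.
rewrite h3; split; [nia|apply/andP; split; nia].
Qed.


Lemma b1_window a m : (5 <= a)%N ->
  let e0 := Ed a 1 m.*2 in let e1 := Ed a 1 (m.*2).+1 in
  let e2 := Ed a 1 (m.*2).+2 in let e3 := Ed a 1 (m.*2).+3 in
  let e4 := Ed a 1 (m.*2).+4 in
  [/\ 0 < e0 /\ e1 <= e0 <= 2 * e1, 0 < e2 /\ e3 <= e2 <= 2 * e3,
      e2 = a%:Z * e1 - e0, e3 = e2 - e1 & e4 = a%:Z * e3 - e2].
Proof.
move=> ha e0 e1 e2 e3 e4.
have := b1_J a ha m; have := b1_J a ha m.+1; rewrite doubleS => J1 J0.
have s1 := b1_stepE a m; have s2 := b1_stepO a m.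
have s3 := b1_stepE a m.+1; rewrite doubleS in s3.
by split.
Qed.

Lemma b1_facts a n : (5 <= a)%N ->
  [/\ Ed a 1 n <= Ed a 1 n.+2, Ec a 1 n <= Ec a 1 n.+2,
      Ed a 1 n <= Ed a 1 n.+3, Ec a 1 n <= Ec a 1 n.+3
    & 0 < Ec a 1 n /\ 0 < Ed a 1 n].
Proof.
move=> ha.
have := odd_double_half n; set m := n./2.
case: (boolP (odd n)) => hn /= E; rewrite -E.
- have [[h0 /andP[h1 h1']] [h2 /andP[h3 h3']] s1 s2 s3] := b1_window a m ha.
  rewrite add1n !b1_Ec /= !odd_double /=.
  have h4 : (a%:Z - 2) * Ed a 1 (m.*2).+3 >= (a%:Z - 2) * ((a%:Z - 3) * Ed a 1 (m.*2).+1) by nia.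
  split; nia.
- have [[h0 /andP[h1 h1']] [h2 /andP[h3 h3']] s1 s2 s3] := b1_window a m ha.
  rewrite add0n !b1_Ec /= !odd_double /=.
  split; nia.
Qed.

Lemma b1_Ecdown a n : (5 <= a)%N -> odd n -> Ec a 1 n.+1 <= Ec a 1 n.
Proof.
move=> ha; have := odd_double_half n; set m := n./2.
move=> + hn; rewrite hn /= add1n => <-.
have [[h0 /andP[h1 h1']] [h2 /andP[h3 h3']] s1 s2 s3] := b1_window a m ha.
rewrite !b1_Ec /= !odd_double /=; nia.
Qed.

Lemma b1_Eddown a n : (5 <= a)%N -> ~~ odd n -> Ed a 1 n.+1 <= Ed a 1 n.
Proof.
move=> ha; have := odd_double_half n; set m := n./2.
move=> + hn; rewrite (negbTE hn) /= add0n => <-.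
have [[h0 /andP[h1 h1']] [h2 /andP[h3 h3']] s1 s2 s3] := b1_window a m ha.
nia.
Qed.


Lemma form_sym a b u v : Defs.form a b u v = Defs.form a b v u.
Proof. rewrite /Defs.form; set q := (_ / b%:R); ring. Qed.

Lemma form_addl a b u v w : Defs.form a b (vadd u v) w = Defs.form a b u w + Defs.form a b v w.
Proof. rewrite /Defs.form /vadd /=; set q := (_ / b%:R); ring. Qed.

Lemma norm2_add a b u v :
  norm2 a b (vadd u v) = norm2 a b u + norm2 a b v + 2 * Defs.form a b u v.
Proof. rewrite /norm2 /Defs.form /vadd /=; set q := (_ / b%:R); ring. Qed.

Lemma form_refl1 a b u v : Defs.form a b (refl1 a u) (refl1 a v) = Defs.form a b u v.
Proof. rewrite /Defs.form /refl1 /pair1 /=; set q := (_ / b%:R); ring. Qed.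

Lemma form_refl2 a b u v : (0 < b)%N ->
  Defs.form a b (refl2 b u) (refl2 b v) = Defs.form a b u v.
Proof.
move=> hb; have hb' : (b%:R : rat) != 0 by rewrite pnatr_eq0 -lt0n.
rewrite /Defs.form /refl2 /pair2 /=; by field.
Qed.

Lemma norm2_refl1 a b u : norm2 a b (refl1 a u) = norm2 a b u.
Proof. exact: form_refl1. Qed.
Lemma norm2_refl2 a b u : (0 < b)%N -> norm2 a b (refl2 b u) = norm2 a b u.
Proof. exact: form_refl2. Qed.
Lemma norm2_vopp a b u : norm2 a b (vopp u) = norm2 a b u.
Proof. rewrite /norm2 /Defs.form /vopp /=; set q := (_ / b%:R); ring. Qed.

Lemma form_alpha1 a b u : Defs.form a b alpha1 u = (pair1 a u)%:~R.
Proof. rewrite /Defs.form /pair1 /alpha1 /=; set q := (_ / b%:R); ring. Qed.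
Lemma form_alpha2 a b u : (0 < b)%N ->
  Defs.form a b alpha2 u = a%:R / b%:R * (pair2 b u)%:~R.
Proof.
move=> hb; have hb' : (b%:R : rat) != 0 by rewrite pnatr_eq0 -lt0n.
rewrite /Defs.form /pair2 /alpha2 /=; by field.
Qed.

Lemma norm2_pairs a b u : (0 < b)%N ->
  norm2 a b u = u.1%:~R * (pair1 a u)%:~R + u.2%:~R * (a%:R / b%:R * (pair2 b u)%:~R).
Proof.
move=> hb; have hb' : (b%:R : rat) != 0 by rewrite pnatr_eq0 -lt0n.
rewrite /norm2 /Defs.form /pair1 /pair2 /=; by field.
Qed.

Lemma qpos a b : (0 < a)%N -> (0 < b)%N -> 0 < (a%:R / b%:R : rat).
Proof. by move=> ha hb; rewrite divr_gt0 // ltr0n. Qed.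
Lemma qle a b : (0 < b)%N -> (a%:R / b%:R : rat) <= a%:R.
Proof.
move=> hb; rewrite ler_pdivrMr ?ltr0n //.
rewrite ler_peMr ?ler0n // ler1n //.
Qed.
Lemma qge1 a b : (0 < b)%N -> (b <= a)%N -> 1 <= (a%:R / b%:R : rat).
Proof.
move=> hb hab; rewrite ler_pdivlMr ?ltr0n // mul1r ler_nat //.
Qed.


Lemma K_norm a b u : (0 < a)%N -> (0 < b)%N -> fund_set_K a b u -> norm2 a b u <= 0.
Proof.
move=> ha hb [/andP[h1 h2] _ h3 h4 _].
rewrite norm2_pairs //.
have q := qpos a b ha hb.
have e1 : (0 : rat) <= u.1%:~R by rewrite ler0z.
have e2 : (0 : rat) <= u.2%:~R by rewrite ler0z.
have e3 : (pair1 a u)%:~R <= (0 : rat) by rewrite lerz0.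
have e4 : (pair2 b u)%:~R <= (0 : rat) by rewrite lerz0.
set x := u.1%:~R in e1 *; set y := u.2%:~R in e2 *.
set p := (pair1 a u)%:~R in e3 *; set r := (pair2 b u)%:~R in e4 *.
set Q := _ / _ in q *.
have : Q * r <= 0 by nra.
nra.
Qed.

Definition Ev (u : rvec) : Prop := exists x y : int, u = (2 * x, 2 * y).

Lemma Ev_refl1 a u : Ev u -> Ev (refl1 a u).
Proof.
case=> x [y ->]; exists (a%:Z * y - x), y; rewrite /refl1 /pair1 /=; congr (_,_); lia.
Qed.
Lemma Ev_refl2 b u : Ev u -> Ev (refl2 b u).
Proof.
case=> x [y ->]; exists x, (b%:Z * x - y); rewrite /refl2 /pair2 /=; congr (_,_); lia.
Qed.
Lemma refl1K a u : refl1 a (refl1 a u) = u.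
Proof. case: u => x y; rewrite /refl1 /pair1 /=; congr (_,_); lia. Qed.
Lemma refl2K b u : refl2 b (refl2 b u) = u.
Proof. case: u => x y; rewrite /refl2 /pair2 /=; congr (_,_); lia. Qed.

Lemma norm2_alpha1 a b : (0 < b)%N -> norm2 a b alpha1 = 2.
Proof.
move=> hb; have hb' : (b%:R : rat) != 0 by rewrite pnatr_eq0 -lt0n.
rewrite /norm2 /Defs.form /=; by field.
Qed.
Lemma norm2_alpha2 a b : (0 < b)%N -> norm2 a b alpha2 = 2 * (a%:R / b%:R).
Proof.
move=> hb; have hb' : (b%:R : rat) != 0 by rewrite pnatr_eq0 -lt0n.
rewrite /norm2 /Defs.form /=; by field.
Qed.

Lemma Worbit_simple_inv a b u : (0 < b)%N -> (b <= a)%N ->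
  Worbit a b simple_root u -> ~ Ev u /\ norm2 a b u <= 2 * (a%:R / b%:R).
Proof.
move=> hb hab; elim=> {u} [u [->|->]| u _ [IH1 IH2] | u _ [IH1 IH2]].
- split; first by case=> x [y []]; lia.
  rewrite norm2_alpha1 //; have := qge1 a b hb hab; lra.
- split; first by case=> x [y []]; lia.
  by rewrite norm2_alpha2.
- split; last by rewrite norm2_refl1.
  by move=> /(Ev_refl1 a); rewrite refl1K.
- split; last by rewrite norm2_refl2.
  by move=> /(Ev_refl2 b); rewrite refl2K.
Qed.

Lemma Worbit_K_inv a b u : (0 < a)%N -> (0 < b)%N ->
  Worbit a b (fund_set_K a b) u -> norm2 a b u <= 0.
Proof.
move=> ha hb; elim=> {u} [u hu | u _ IH | u _ IH].
- exact: K_norm.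
- by rewrite norm2_refl1.
- by rewrite norm2_refl2.
Qed.

Lemma is_root_inv a b u : (0 < b)%N -> (b <= a)%N -> is_root a b u ->
  norm2 a b u <= 0 \/ (~ Ev u /\ norm2 a b u <= 2 * (a%:R / b%:R)).
Proof.
move=> hb hab; have ha : (0 < a)%N by apply: leq_trans hab.
case=> [h|[h|h]].
- by right; apply: Worbit_simple_inv.
- by left; apply: Worbit_K_inv.
- by left; rewrite -norm2_vopp; apply: Worbit_K_inv.
Qed.

Lemma vopp_refl1 a u : vopp (refl1 a u) = refl1 a (vopp u).
Proof. rewrite /vopp /refl1 /pair1 /=; congr (_,_); lia. Qed.
Lemma vopp_refl2 b u : vopp (refl2 b u) = refl2 b (vopp u).
Proof. rewrite /vopp /refl2 /pair2 /=; congr (_,_); lia. Qed.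

Lemma is_root_refl1 a b u : is_root a b u -> is_root a b (refl1 a u).
Proof.
case=> [h|[h|h]]; [left|right;left|right;right]; try by apply: Wo_r1.
by rewrite vopp_refl1; apply: Wo_r1.
Qed.
Lemma is_root_refl2 a b u : is_root a b u -> is_root a b (refl2 b u).
Proof.
case=> [h|[h|h]]; [left|right;left|right;right]; try by apply: Wo_r2.
by rewrite vopp_refl2; apply: Wo_r2.
Qed.

Lemma refl1_add a u v : refl1 a (vadd u v) = vadd (refl1 a u) (refl1 a v).
Proof. rewrite /vadd /refl1 /pair1 /=; congr (_,_); lia. Qed.
Lemma refl2_add b u v : refl2 b (vadd u v) = vadd (refl2 b u) (refl2 b v).
Proof. rewrite /vadd /refl2 /pair2 /=; congr (_,_); lia. Qed.
Lemma vaddC u v : vadd u v = vadd v u.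
Proof. rewrite /vadd; congr (_,_); lia. Qed.

Lemma refl1_beta1 a b n : refl1 a (beta1 a b n) = beta2 a b n.+1.
Proof. rewrite /refl1 /beta1 /beta2 /pair1 /= c_rec; congr (_,_); lia. Qed.
Lemma refl2_beta2 a b n : refl2 b (beta2 a b n) = beta1 a b n.+1.
Proof. rewrite /refl2 /beta1 /beta2 /pair2 /= d_rec; congr (_,_); lia. Qed.
Lemma refl1_beta2 a b n : refl1 a (beta2 a b n.+1) = beta1 a b n.
Proof. by rewrite -refl1_beta1 refl1K. Qed.
Lemma refl2_beta1 a b n : refl2 b (beta1 a b n.+1) = beta2 a b n.
Proof. by rewrite -refl2_beta2 refl2K. Qed.

Lemma beta_Worbit a b n :
  Worbit a b simple_root (beta1 a b n) /\ Worbit a b simple_root (beta2 a b n).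
Proof.
elim: n => [|n [IH1 IH2]].
  by split; apply: Wo_base; [right|left].
by rewrite -refl1_beta1 -refl2_beta2; split; [apply: Wo_r2|apply: Wo_r1].
Qed.


Definition hyp (a b : nat) : Prop := ((2 <= b)%N /\ (b <= a)%N) \/ (b = 1%N /\ (5 <= a)%N).

Lemma hyp_b a b : hyp a b -> (0 < b)%N /\ (b <= a)%N /\ (0 < a)%N.
Proof. case=> [[h1 h2]|[-> h]]; lia. Qed.

Lemma Epos a b n : hyp a b -> 0 < Ec a b n /\ 0 < Ed a b n.
Proof.
case=> [[h1 h2]|[-> h]].
- by have [/andP[? _] /andP[? _]] := mono2 a b h1 h2 n.
- by have [_ _ _ _ []] := b1_facts a n h.
Qed.

Lemma c_step a b n : cseq a b n.+2 = cseq a b n + Ec a b n.+1.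
Proof. rewrite /Ec c_rec; lia. Qed.
Lemma d_step a b n : dseq a b n.+2 = dseq a b n + Ed a b n.+1.
Proof. rewrite /Ed d_rec; lia. Qed.

Lemma cd_pos a b n : hyp a b ->
  [/\ 0 <= cseq a b n, 0 <= dseq a b n, 1 <= cseq a b n.+1 & 1 <= dseq a b n.+1].
Proof.
move=> H.
suff S : forall n, [/\ 0 <= cseq a b n, 0 <= dseq a b n, 1 <= cseq a b n.+1 & 1 <= dseq a b n.+1]
          /\ [/\ 0 <= cseq a b n.+1, 0 <= dseq a b n.+1, 1 <= cseq a b n.+2 & 1 <= dseq a b n.+2].
  by case: (S n).
elim=> [|m [_ [h1 h2 h3 h4]]].
  rewrite c_step d_step c0 d0 c1 d1.
  have [e1 e2] := Epos a b 1 H; split; split; lia.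
split; first by split; lia.
rewrite (c_step a b m.+1) (d_step a b m.+1).
have [e1 e2] := Epos a b m.+2 H; split; lia.
Qed.

Lemma G_formula a b j n : (0 < b)%N ->
  Defs.form a b (beta1 a b j) (beta1 a b (j + n)) =
    (if odd j then (Ec a b n)%:~R else a%:R / b%:R * (Ed a b n)%:~R)
  /\ Defs.form a b (beta2 a b j) (beta2 a b (j + n)) =
    (if odd j then a%:R / b%:R * (Ed a b n)%:~R else (Ec a b n)%:~R).
Proof.
move=> hb; elim: j => [|j [IH1 IH2]].
  rewrite /= add0n; split.
  - by have -> : beta1 a b 0 = alpha2 by []; rewrite form_alpha2.
  - by have -> : beta2 a b 0 = alpha1 by []; rewrite form_alpha1.
rewrite addSn -!refl2_beta2 -!refl1_beta1 form_refl2 // form_refl1 /=.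
by rewrite IH1 IH2; case: (odd j).
Qed.

Lemma G1_nonneg a b j k : hyp a b -> 0 <= Defs.form a b (beta1 a b j) (beta1 a b k).
Proof.
move=> H; have [hb [hab ha]] := hyp_b a b H.
wlog hjk : j k / (j <= k)%N.
  move=> W; case: (leqP j k) => h; first exact: W.
  by rewrite form_sym; apply: W; apply: ltnW.
rewrite -(subnKC hjk); have [G1 _] := G_formula a b j (k - j) hb; rewrite G1.
have [e1 e2] := Epos a b (k - j) H.
have q := qpos a b ha hb.
case: (odd j); first by rewrite ler0z; lia.
apply: mulr_ge0; first exact: ltW.
by rewrite ler0z; lia.
Qed.

Lemma G2_nonneg a b j k : hyp a b -> 0 <= Defs.form a b (beta2 a b j) (beta2 a b k).
Proof.
move=> H; have [hb [hab ha]] := hyp_b a b H.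
wlog hjk : j k / (j <= k)%N.
  move=> W; case: (leqP j k) => h; first exact: W.
  by rewrite form_sym; apply: W; apply: ltnW.
rewrite -(subnKC hjk); have [_ G2] := G_formula a b j (k - j) hb; rewrite G2.
have [e1 e2] := Epos a b (k - j) H.
have q := qpos a b ha hb.
case: (odd j); last by rewrite ler0z; lia.
apply: mulr_ge0; first exact: ltW.
by rewrite ler0z; lia.
Qed.

Lemma norm_beta a b j : (0 < b)%N ->
  norm2 a b (beta1 a b j) = (if odd j then 2 else 2 * (a%:R / b%:R))
  /\ norm2 a b (beta2 a b j) = (if odd j then 2 * (a%:R / b%:R) else 2).
Proof.
move=> hb; have [G1 G2] := G_formula a b j 0 hb.
rewrite /norm2 -{2}(addn0 j) G1 -{4}(addn0 j) G2 Ec0 Ed0.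
by case: (odd j); split => //; rewrite mulrC.
Qed.


Lemma norm_beta_pos a b j : hyp a b ->
  0 < norm2 a b (beta1 a b j) /\ 0 < norm2 a b (beta2 a b j).
Proof.
move=> H; have [hb [hab ha]] := hyp_b a b H.
have q := qpos a b ha hb; have [-> ->] := norm_beta a b j hb.
by case: (odd j); split; lra.
Qed.

Lemma part1 a b j k : hyp a b ->
  0 < norm2 a b (vadd (beta1 a b k) (beta1 a b j)) /\
  0 < norm2 a b (vadd (beta2 a b k) (beta2 a b j)).
Proof.
move=> H; rewrite !norm2_add.
have [p1 p2] := norm_beta_pos a b j H; have [p3 p4] := norm_beta_pos a b k H.
have g1 := G1_nonneg a b k j H; have g2 := G2_nonneg a b k j H.
split; lra.
Qed.

Lemma pair_case1 a b j n : (0 < b)%N ->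
  let x := beta1 a b j in let y := beta1 a b (j + n) in
  (norm2 a b x = 2 * (a%:R / b%:R) \/ norm2 a b y = 2 * (a%:R / b%:R)) \/
  [/\ norm2 a b x = 2, norm2 a b y = 2, ~~ odd n, odd j & Defs.form a b x y = (Ec a b n)%:~R].
Proof.
move=> hb x y.
have [nx _] := norm_beta a b j hb; have [ny _] := norm_beta a b (j + n) hb.
have [G _] := G_formula a b j n hb.
rewrite /x /y nx ny G; rewrite oddD.
case: (odd j); case: (odd n) => /=; [by left; right|by right|by left; left|by left; left].
Qed.

Lemma pair_case2 a b j n : (0 < b)%N ->
  let x := beta2 a b j in let y := beta2 a b (j + n) in
  (norm2 a b x = 2 * (a%:R / b%:R) \/ norm2 a b y = 2 * (a%:R / b%:R)) \/
  [/\ norm2 a b x = 2, norm2 a b y = 2, ~~ odd n, ~~ odd j & Defs.form a b x y = (Ec a b n)%:~R].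
Proof.
move=> hb x y.
have [_ nx] := norm_beta a b j hb; have [_ ny] := norm_beta a b (j + n) hb.
have [_ G] := G_formula a b j n hb.
rewrite /x /y nx ny G; rewrite oddD.
case: (odd j); case: (odd n) => /=; [by left; left|by left; left|by left; right|by right].
Qed.

Lemma Ec2 a b : Ec a b 2 = a%:Z * b%:Z - 2.
Proof. rewrite Ec_rec Ed1 Ec0; lia. Qed.

Lemma Ec_ge2 a b n : (2 <= b)%N -> (b <= a)%N -> (2 <= n)%N -> a%:Z * b%:Z - 2 <= Ec a b n.
Proof.
move=> hb hab; elim: n => [|n IH] //= hn.
case: (ltngtP n 1) => h.
- lia.
- have := mono2 a b hb hab n => -[/andP[_ h1] _]; have := IH h; lia.
- by rewrite h Ec2.
Qed.

Lemma Ec_b1_big a p : (5 <= a)%N -> a%:Z - 2 < Ec a 1 (p.+2).*2.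
Proof.
move=> ha; elim: p => [|p IH].
  rewrite /= !(Ec_rec, Ed_rec) Ec0 Ed1; nia.
have := b1_facts a ((p.+2).*2) ha => -[_ h _ _ _].
rewrite doubleS; lia.
Qed.

Lemma Ev_dbl u : Ev (vadd u u).
Proof. by exists u.1, u.2; rewrite /vadd; congr (_,_); lia. Qed.

Lemma key1 a b j n : hyp a b ->
  let N := norm2 a b (vadd (beta1 a b j) (beta1 a b (j + n))) in
  2 * (a%:R / b%:R) < N \/ [/\ odd j, ~~ odd n & N = 4 + 2 * (Ec a b n)%:~R].
Proof.
move=> H N; have [hb [hab ha]] := hyp_b a b H.
have g := G1_nonneg a b j (j + n) H.
have [p1 _] := norm_beta_pos a b j H; have [p2 _] := norm_beta_pos a b (j + n) H.
rewrite /N norm2_add.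
have [[e|e]|[e1 e2 h1 h2 e3]] := pair_case1 a b j n hb.
- by left; lra.
- by left; lra.
- by right; split => //; rewrite e1 e2 e3; lra.
Qed.

Lemma key2 a b j n : hyp a b ->
  let N := norm2 a b (vadd (beta2 a b j) (beta2 a b (j + n))) in
  2 * (a%:R / b%:R) < N \/ [/\ ~~ odd j, ~~ odd n & N = 4 + 2 * (Ec a b n)%:~R].
Proof.
move=> H N; have [hb [hab ha]] := hyp_b a b H.
have g := G2_nonneg a b j (j + n) H.
have [_ p1] := norm_beta_pos a b j H; have [_ p2] := norm_beta_pos a b (j + n) H.
rewrite /N norm2_add.
have [[e|e]|[e1 e2 h1 h2 e3]] := pair_case2 a b j n hb.
- by left; lra.
- by left; lra.
- by right; split => //; rewrite e1 e2 e3; lra.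
Qed.

Lemma big2 a b n : (2 <= b)%N -> (b <= a)%N -> ~~ odd n -> (0 < n)%N ->
  2 * (a%:R / b%:R) < 4 + 2 * ((Ec a b n)%:~R : rat).
Proof.
move=> hb hab hn hn0.
have h2 : (2 <= n)%N by case: n hn hn0 => [|[|n]].
have := Ec_ge2 a b n hb hab h2.
rewrite -(ler_int rat) => h.
have e : ((a%:Z * b%:Z - 2)%:~R : rat) = a%:R * b%:R - 2 by rewrite intrB intrM.
rewrite e in h.
have ql := qle a b (ltnW hb).
have ha : (1 : rat) <= a%:R by rewrite ler1n; apply: leq_trans hab; apply: ltnW.
have hb' : (2 : rat) <= b%:R by rewrite ler_nat.
nra.
Qed.

Lemma part1a a b j k : (2 <= b)%N -> (b <= a)%N ->
  ~ is_root a b (vadd (beta1 a b k) (beta1 a b j)) /\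
  ~ is_root a b (vadd (beta2 a b k) (beta2 a b j)).
Proof.
move=> hb hab; have H : hyp a b by left.
have [hb0 _] := hyp_b a b H.
have [P1 P2] := part1 a b j k H.
wlog hjk : j k P1 P2 / (k <= j)%N.
  move=> W; case: (leqP k j) => h; first exact: W.
  rewrite vaddC [vadd (beta2 a b k) _]vaddC.
  have [P3 P4] := part1 a b k j H.
  by apply: W => //; apply: ltnW.
case: (ltngtP k j) hjk => // [hlt|ekj] _; last first.
  subst j.
  split=> /(is_root_inv a b _ hb0 hab) [h|[h _]]; try lra; apply: h; exact: Ev_dbl.
rewrite -(subnKC (ltnW hlt)) in P1 P2 *; set n := (j - k)%N in P1 P2 *.
have n0 : (0 < n)%N by rewrite subn_gt0.
split=> /(is_root_inv a b _ hb0 hab) [h|[_ h]]; try lra.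
- case: (key1 a b k n H) => [|[_ hn e]]; first lra.
  have := big2 a b n hb hab hn n0; lra.
- case: (key2 a b k n H) => [|[_ hn e]]; first lra.
  have := big2 a b n hb hab hn n0; lra.
Qed.

Lemma b1_sum a m : ~~ odd m ->
  vadd (beta1 a 1 m.+1) (beta1 a 1 m.+3) = beta1 a 1 m.+2 /\
  vadd (beta2 a 1 m) (beta2 a 1 m.+2) = beta2 a 1 m.+1.
Proof.
move=> hm.
have e1 := c_rec a 1 m.+1; have e2 := cd_even a 1 m.+2 ltac:(by rewrite /= negbK).
have e3 := d_rec a 1 m.+2; have e4 := cd_odd a 1 m.+3 ltac:(by rewrite /= negbK).
have e5 := d_rec a 1 m; have e6 := cd_odd a 1 m.+1 ltac:(by rewrite /=).
rewrite /vadd /beta1 /beta2 /=; split; congr (_,_); lia.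
Qed.

Lemma part1b_exist a k : (5 <= a)%N ->
  real_root a 1 (vadd (beta1 a 1 (2 * k + 1)) (beta1 a 1 (2 * k + 3)))
  /\ real_root a 1 (vadd (beta2 a 1 (2 * k)) (beta2 a 1 (2 * k + 2))).
Proof.
move=> ha; have H : hyp a 1 by right.
have hm : ~~ odd (2 * k)%N by rewrite oddM.
have [s1 s2] := b1_sum a (2 * k) hm.
have -> : (2 * k + 1)%N = (2 * k).+1 by lia.
have -> : (2 * k + 3)%N = (2 * k).+3 by lia.
have -> : (2 * k + 2)%N = (2 * k).+2 by lia.
have [P1 _] := part1 a 1 (2 * k).+3 (2 * k).+1 H.
have [_ P2] := part1 a 1 (2 * k).+2 (2 * k) H.
split; split => //.
- by rewrite s1; left; have [] := beta_Worbit a 1 (2 * k).+2.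
- by rewrite s2; left; have [] := beta_Worbit a 1 (2 * k).+1.
Qed.

Lemma b1_n2 a n : (5 <= a)%N -> ~~ odd n -> (0 < n)%N ->
  4 + 2 * ((Ec a 1 n)%:~R : rat) <= 2 * (a%:R / 1%:R) -> n = 2%N.
Proof.
move=> ha hn n0; rewrite mulr1n divr1 => h.
have h' : ((Ec a 1 n)%:~R : rat) <= ((a%:Z - 2)%:~R : rat).
  have e : ((a%:Z - 2)%:~R : rat) = a%:R - 2 by ring.
  rewrite e; lra.
rewrite ler_int in h'.
have E := odd_double_half n; rewrite (negbTE hn) add0n in E.
case: (ltngtP n./2 1) => h2.
- have : n./2 = 0%N by lia.
  by move=> e; rewrite e in E; rewrite -E in n0.
- have := Ec_b1_big a (n./2 - 2) ha.
  have -> : ((n./2 - 2).+2 = n./2)%N by lia.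
  rewrite E; lia.
- by rewrite -E h2.
Qed.

Lemma part1b_uniq a j k : (5 <= a)%N ->
  (real_root a 1 (vadd (beta1 a 1 j) (beta1 a 1 k)) ->
    exists m : nat, (j = 2 * m + 1 /\ k = 2 * m + 3)%N \/ (j = 2 * m + 3 /\ k = 2 * m + 1)%N)
  /\
  (real_root a 1 (vadd (beta2 a 1 j) (beta2 a 1 k)) ->
    exists m : nat, (j = 2 * m /\ k = 2 * m + 2)%N \/ (j = 2 * m + 2 /\ k = 2 * m)%N).
Proof.
move=> ha; have H : hyp a 1 by right.
have hab : (1 <= a)%N by apply: leq_trans ha.
wlog hjk : j k / (j <= k)%N.
  move=> W; case: (leqP j k) => h; first exact: W.
  have [W1 W2] := W k j (ltnW h).
  split.
  - rewrite vaddC => /W1 [m [[-> ->]|[-> ->]]]; exists m; [right|left]; done.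
  - rewrite vaddC => /W2 [m [[-> ->]|[-> ->]]]; exists m; [right|left]; done.
case: (ltngtP j k) hjk => // [hlt|ejk] _; last first.
  subst k; split=> -[/(is_root_inv a 1 _ erefl hab) [h|[h _]] hp]; try lra;
  by exfalso; apply: h; exact: Ev_dbl.
rewrite -(subnKC (ltnW hlt)); set n := (k - j)%N.
have n0 : (0 < n)%N by rewrite subn_gt0.
split=> -[/(is_root_inv a 1 _ erefl hab) [h|[_ h]] hp]; try lra.
- case: (key1 a 1 j n H) => [|[hj hn e]]; first lra.
  rewrite e in h; have := b1_n2 a n ha hn n0 h => n2.
  exists j./2; left; rewrite n2.
  have := odd_double_half j; rewrite hj -muln2; lia.
- case: (key2 a 1 j n H) => [|[hj hn e]]; first lra.
  rewrite e in h; have := b1_n2 a n ha hn n0 h => n2.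
  exists j./2; left; rewrite n2.
  have := odd_double_half j; rewrite (negbTE hj) -muln2; lia.
Qed.


Definition gam a b k j := vadd (beta1 a b k) (beta2 a b j).

Lemma gam_r1 a b x y : refl1 a (gam a b x y.+1) = gam a b y x.+1.
Proof. by rewrite /gam refl1_add refl1_beta1 refl1_beta2 vaddC. Qed.
Lemma gam_r2 a b x y : refl2 b (gam a b x.+1 y) = gam a b y.+1 x.
Proof. by rewrite /gam refl2_add refl2_beta1 refl2_beta2 vaddC. Qed.

Lemma pair1_gam a b x y : pair1 a (gam a b x y) = Ec a b y - Ec a b x.+1.
Proof. rewrite /pair1 /gam /vadd /beta1 /beta2 /Ec /= (c_rec a b x); lia. Qed.
Lemma pair2_gam a b x y : pair2 b (gam a b x y) = Ed a b x - Ed a b y.+1.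
Proof. rewrite /pair2 /gam /vadd /beta1 /beta2 /Ed /= (d_rec a b y); lia. Qed.

Lemma K_gam a b x y : hyp a b -> Ec a b y <= Ec a b x.+1 -> Ed a b x <= Ed a b y.+1 ->
  fund_set_K a b (gam a b x y).
Proof.
move=> H h1 h2; have [hb [hab ha]] := hyp_b a b H.
have [p1 p2 _ _] := cd_pos a b x H; have [_ _ p3 p4] := cd_pos a b y H.
have [_ _ p5 p6] := cd_pos a b x H; have [p7 p8 _ _] := cd_pos a b y H.
split.
- rewrite /gam /vadd /beta1 /beta2 /=; apply/andP; split; lia.
- rewrite /gam /vadd /beta1 /beta2 /= => -[]; lia.
- by rewrite pair1_gam; lia.
- by rewrite pair2_gam; lia.
- by move=> _; rewrite -lt0n.
Qed.

Definition RK a b k j := Worbit a b (fund_set_K a b) (gam a b k j).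

Lemma RK_m1 a b x y : RK a b x y.+1 -> RK a b y x.+1.
Proof. by move=> h; rewrite /RK -gam_r1; apply: Wo_r1. Qed.
Lemma RK_m2 a b x y : RK a b x.+1 y -> RK a b y.+1 x.
Proof. by move=> h; rewrite /RK -gam_r2; apply: Wo_r2. Qed.

Lemma RK_all a b :
  (forall k, RK a b k.+1 k.+1) -> (forall k, RK a b k k.+1 /\ RK a b k.+1 k) ->
  forall k j, (0 < k + j)%N -> RK a b k j.
Proof.
move=> B0 B1.
suff S : forall n, (forall k, (0 < n + k)%N -> RK a b k (k + n) /\ RK a b (k + n) k)
                /\ (forall k, RK a b k (k + n.+1) /\ RK a b (k + n.+1) k).
  move=> k j hkj; case: (leqP k j) => h.
  - have [S1 S2] := S (j - k)%N.
    have := S1 k ltac:(lia); rewrite subnKC //; by case.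
  - have [S1 S2] := S (k - j)%N.
    have := S1 j ltac:(lia); rewrite subnKC; [by case| exact: ltnW].
elim=> [|n [IH1 IH2]].
  split=> k; last by rewrite addn1; apply: B1.
  rewrite add0n addn0 => hk; case: k hk => // k _; split; exact: B0.
split=> // k.
have [h1 h2] := IH1 k.+1 ltac:(lia).
split.
- have := RK_m1 a b (k.+1 + n) k h2.
  by have -> : (k.+1 + n).+1 = (k + n.+2)%N by lia.
- have := RK_m2 a b k (k.+1 + n) h1.
  by have -> : (k.+1 + n).+1 = (k + n.+2)%N by lia.
Qed.

Lemma RK_b2 a b k j : (2 <= b)%N -> (b <= a)%N -> RK a b k j.
Proof.
move=> hb hab; have H : hyp a b by left.
have M := mono2 a b hb hab.
have B0 : forall k, RK a b k k.
  move=> m; apply: Wo_base; apply: K_gam => //.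
  - by have [/andP[_ ?] _] := M m.
  - by have [_ /andP[_ ?]] := M m.
case: (posnP (k + j)) => [e|hkj].
  have ek : k = 0%N by lia.
  have ej : j = 0%N by lia.
  by rewrite ek ej; apply: B0.
apply: RK_all => // m; split; apply: Wo_base; apply: K_gam => //.
- have [_ /andP[_ h1]] := M m; have [_ /andP[_ h2]] := M m.+1; lia.
- have [/andP[_ h1] _] := M m; have [/andP[_ h2] _] := M m.+1; lia.
Qed.

Lemma RK_b1 a k j : (5 <= a)%N -> (0 < k + j)%N -> RK a 1 k j.
Proof.
move=> ha; have H : hyp a 1 by right.
apply: RK_all => m.
- case: (boolP (odd m)) => hm.
  + apply: (RK_m2 a 1 m.+1 m); apply: Wo_base; apply: K_gam => //.
    * by have [_ _ _ h _] := b1_facts a m ha.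
    * by apply: (b1_Eddown a m.+1 ha); rewrite /= hm.
  + apply: (RK_m1 a 1 m m.+1); apply: Wo_base; apply: K_gam => //.
    * by apply: (b1_Ecdown a m.+1 ha); rewrite /= hm.
    * by have [_ _ h _ _] := b1_facts a m ha.
- have [h1 h2 _ _ _] := b1_facts a m ha.
  split; apply: Wo_base; apply: K_gam => //.
Qed.

Lemma part2 a b j k : hyp a b ->
  is_root a b (vadd (beta1 a b k) (beta2 a b j))
  /\ (~ (b = 1%N /\ k = 0%N /\ j = 0%N) -> norm2 a b (vadd (beta1 a b k) (beta2 a b j)) <= 0).
Proof.
move=> H; have [hb [hab ha]] := hyp_b a b H.
have RK_ok : ~ (b = 1%N /\ k = 0%N /\ j = 0%N) -> RK a b k j.
  move=> hn; case: H => [[h1 h2]|[e h]]; first exact: RK_b2.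
  subst b; apply: RK_b1 => //; lia.
case: (boolP ((b == 1)%N && (k == 0)%N && (j == 0)%N)) => hc.
  move: hc => /andP[/andP[/eqP eb /eqP ek] /eqP ej]; subst b k j.
  split; last by case.
  left; have -> : vadd (beta1 a 1 0) (beta2 a 1 0) = refl2 1 alpha1.
    by rewrite /vadd /refl2 /pair2 /beta1 /beta2 /alpha1 c0 c1 d0 d1 /=; congr (_,_); lia.
  by apply: Wo_r2; apply: Wo_base; left.
have hn : ~ (b = 1%N /\ k = 0%N /\ j = 0%N).
  by case=> eb [ek ej]; move: hc; rewrite eb ek ej.
have R := RK_ok hn.
split; first by right; left; exact: R.
by move=> _; apply: Worbit_K_inv.
Qed.

Theorem proposition4p6 (a b : nat) (hba : (b <= a)%N) (hb : (1 <= b)%N)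
  (hab : (2 <= b)%N \/ (b = 1%N /\ (5 <= a)%N)) :
  [/\ (* (1) *)
      (forall j k : nat, 0 < norm2 a b (vadd (beta1 a b k) (beta1 a b j)))
      /\ (forall j k : nat, 0 < norm2 a b (vadd (beta2 a b k) (beta2 a b j))),
      (* (1a) *)
      ((2 <= b)%N -> forall j k : nat,
          ~ is_root a b (vadd (beta1 a b k) (beta1 a b j))
          /\ ~ is_root a b (vadd (beta2 a b k) (beta2 a b j))),
      (* (1b) *)
      (b = 1%N -> (5 <= a)%N ->
        [/\ forall k : nat,
              real_root a b (vadd (beta1 a b (2 * k + 1)) (beta1 a b (2 * k + 3)))
              /\ real_root a b (vadd (beta2 a b (2 * k)) (beta2 a b (2 * k + 2))),
            forall j k : nat, real_root a b (vadd (beta1 a b j) (beta1 a b k)) ->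
              exists m : nat, (j = 2 * m + 1 /\ k = 2 * m + 3)%N
                              \/ (j = 2 * m + 3 /\ k = 2 * m + 1)%N
          & forall j k : nat, real_root a b (vadd (beta2 a b j) (beta2 a b k)) ->
              exists m : nat, (j = 2 * m /\ k = 2 * m + 2)%N
                              \/ (j = 2 * m + 2 /\ k = 2 * m)%N])
    & (* (2) *)
      forall j k : nat,
        is_root a b (vadd (beta1 a b k) (beta2 a b j))
        /\ (~ (b = 1%N /\ k = 0%N /\ j = 0%N) ->
            norm2 a b (vadd (beta1 a b k) (beta2 a b j)) <= 0)].
Proof.
have H : hyp a b.
  by case: hab => [h2|[e h5]]; [left|right].
split.
- split=> j k; [exact: (part1 a b j k H).1 | exact: (part1 a b j k H).2].
- by move=> h2 j k; apply: part1a.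
- move=> e h5; subst b; split.
  + by move=> k; apply: part1b_exist.
  + by move=> j k; exact: (part1b_uniq a j k h5).1.
  + by move=> j k; exact: (part1b_uniq a j k h5).2.
- by move=> j k; apply: part2.
Qed.
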